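(* Let $(H,\leq,\ast)$ be a discrete $\omega$-dimensional poc-set and let $A$ be a maximal transverse subset of $H$. Then $$\pi_A=\{h\in H:\exists a\in A,\ a\leq h\}\cup\{h\in H:\exists a\in A,\ a^\ast<h\}$$ is a principal ultrafilter on $H$. Moreover, every principal ultrafilter on $H$ is of this form.
   Context: A poc-set $(H,\leq,\ast)$ is a poset with minimum $0$ and an order-reversing involution $h\mapsto h^\ast$ such that $h\leq h^\ast$ implies $h=0$; $0,0^\ast$ are trivial, others proper. Discrete: for proper $a,b$ the interval $\{h:a\le h\le b\}$ is finite. $h,k$ are nested if one of $h\le k$, $h^\ast\le k$, $h\le k^\ast$, $h^\ast\le k^\ast$ holds, transverse otherwise; a set is transverse if its elements are pairwise transverse. $\omega$-dimensional: no infinite transverse subset. An ultrafilter is $\alpha\subseteq H$ such that for each $h$ exactly one of $h,h^\ast$ lies in $\alpha$, and no $h,k\in\alpha$ satisfy $h\le k^\ast$. An ultrafilter is principal if every descending chain $h_1\ge h_2\ge\cdots$ of its elements is eventually constant. *)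

(* Defs.v *)
From Stdlib Require Import List.

Record PocSet := {
  carrier :> Type;
  le : carrier -> carrier -> Prop;
  zero : carrier;
  star : carrier -> carrier;
  le_refl : forall h, le h h;
  le_antisym : forall h k, le h k -> le k h -> h = k;
  le_trans : forall h k l, le h k -> le k l -> le h l;
  zero_min : forall h, le zero h;
  star_rev : forall h k, le h k -> le (star k) (star h);
  star_invol : forall h, star (star h) = h;
  star_poc : forall h, le h (star h) -> h = zero
}.

Section Defs.
Variable H : PocSet.

Definition lt (h k : H) : Prop := le H h k /\ h <> k.

Definition trivial (h : H) : Prop := h = zero H \/ h = star H (zero H).
Definition proper (h : H) : Prop := ~ trivial h.

Definition finite_set (P : H -> Prop) : Prop :=
  exists l : list H, forall h, P h -> In h l.

Definition discrete : Prop :=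
  forall a b : H, proper a -> proper b ->
    finite_set (fun h => le H a h /\ le H h b).

Definition nested (h k : H) : Prop :=
  le H h k \/ le H (star H h) k \/ le H h (star H k) \/
  le H (star H h) (star H k).

Definition transverse (h k : H) : Prop := ~ nested h k.

Definition transverse_set (A : H -> Prop) : Prop :=
  forall h k, A h -> A k -> h <> k -> transverse h k.

Definition omega_dimensional : Prop :=
  forall A : H -> Prop, transverse_set A -> finite_set A.

Definition maximal_transverse (A : H -> Prop) : Prop :=
  (forall h, A h -> proper h) /\ transverse_set A /\
  forall B : H -> Prop,
    (forall h, B h -> proper h) -> transverse_set B ->
    (forall h, A h -> B h) -> forall h, B h -> A h.

Definition ultrafilter (alpha : H -> Prop) : Prop :=
  (forall h, (alpha h /\ ~ alpha (star H h)) \/ (~ alpha h /\ alpha (star H h))) /\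
  (forall h k, alpha h -> alpha k -> ~ le H h (star H k)).

Definition principal (alpha : H -> Prop) : Prop :=
  forall f : nat -> H,
    (forall n, alpha (f n)) -> (forall n, le H (f (S n)) (f n)) ->
    exists N, forall n, N <= n -> f n = f N.

Definition pi_set (A : H -> Prop) : H -> Prop :=
  fun h => (exists a, A a /\ le H a h) \/ (exists a, A a /\ lt (star H a) h).

End Defs.

(* Main.v *)
Require Import Defs.
From Stdlib Require Import List Classical ClassicalEpsilon Lia Arith.

Lemma sr1 (H : PocSet) (h k : H) : le H (star H h) k -> le H (star H k) h.
Proof. intro E. rewrite <- (star_invol H h). apply star_rev. exact E. Qed.

Lemma sr2 (H : PocSet) (h k : H) : le H h (star H k) -> le H k (star H h).
Proof. intro E. rewrite <- (star_invol H k) at 1. apply star_rev. exact E. Qed.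

Lemma sr3 (H : PocSet) (h k : H) : le H (star H h) (star H k) -> le H k h.
Proof. intro E. rewrite <- (star_invol H h), <- (star_invol H k). apply star_rev. exact E. Qed.

Lemma le_top (H : PocSet) (h : H) : le H h (star H (zero H)).
Proof. rewrite <- (star_invol H h) at 1. apply star_rev. apply zero_min. Qed.

Lemma nested_sym (H : PocSet) (h k : H) : nested H h k -> nested H k h.
Proof.
  unfold nested. intros [E|[E|[E|E]]].
  - right; right; right. apply star_rev; exact E.
  - right; left. apply sr1; exact E.
  - right; right; left. apply sr2; exact E.
  - left. apply sr3; exact E.
Qed.

Lemma nested_star (H : PocSet) (h k : H) : nested H (star H h) k -> nested H h k.
Proof. unfold nested. rewrite star_invol. tauto. Qed.

Lemma star_inj (H : PocSet) (h k : H) : star H h = star H k -> h = k.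
Proof. intro E. rewrite <- (star_invol H h), <- (star_invol H k), E. reflexivity. Qed.

Lemma self_star_le (H : PocSet) (h : H) : le H (star H h) h -> h = star H (zero H).
Proof.
  intro E. assert (E2 : star H h = zero H).
  { apply star_poc. rewrite star_invol. exact E. }
  rewrite <- E2, star_invol. reflexivity.
Qed.

Lemma proper_star (H : PocSet) (h : H) : proper H h -> proper H (star H h).
Proof.
  unfold proper, trivial. intros P [E|E]; apply P.
  - right. rewrite <- E, star_invol. reflexivity.
  - left. apply star_inj. exact E.
Qed.

Lemma desc_le (H : PocSet) (f : nat -> H) :
  (forall n, le H (f (S n)) (f n)) -> forall n m, n <= m -> le H (f m) (f n).
Proof.
  intros D n m Hnm. induction Hnm. apply le_refl. eapply le_trans. apply D. exact IHHnm.
Qed.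

Lemma ev_const (H : PocSet) (f : nat -> H) :
  (forall n, le H (f (S n)) (f n)) ->
  forall l N, (forall n, N <= n -> In (f n) l) ->
  exists M, forall n, M <= n -> f n = f M.
Proof.
  intros D l. induction l as [|y l IH]; intros N HN.
  - exfalso. exact (HN N (le_n N)).
  - destruct (classic (forall M, exists n, M <= n /\ f n = y)) as [Hinf|Hfin].
    + destruct (Hinf 0) as [n0 [_ E0]]. exists n0. intros n Hn.
      destruct (Hinf n) as [m [Hm Em]].
      apply (le_antisym H).
      * apply (desc_le H f D); assumption.
      * rewrite E0, <- Em. apply (desc_le H f D); assumption.
    + apply not_all_ex_not in Hfin. destruct Hfin as [M0 HM0].
      apply (IH (max N M0)). intros n Hn.
      destruct (HN n ltac:(lia)) as [E|E].
      * exfalso. apply HM0. exists n. split; [lia|auto].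
      * exact E.
Qed.

Lemma pigeon (T : Type) (l : list T) : forall (P : T -> nat -> Prop),
  (forall n, exists x, In x l /\ P x n) ->
  exists x, In x l /\ forall N, exists n, N <= n /\ P x n.
Proof.
  induction l as [|y l IH]; intros P HP.
  - destruct (HP 0) as [x [[] _]].
  - destruct (classic (forall N, exists n, N <= n /\ P y n)) as [Hy|Hy].
    + exists y. split; [left; reflexivity| exact Hy].
    + apply not_all_ex_not in Hy. destruct Hy as [N0 HN0].
      destruct (IH (fun x n => P x (n + N0))) as [x [Hx Hinf]].
      * intros n. destruct (HP (n + N0)) as [x [[E|Hx] Px]].
        -- exfalso. apply HN0. exists (n + N0). subst. split; [lia|exact Px].
        -- exists x. split; assumption.
      * exists x. split; [right; exact Hx|]. intros N. destruct (Hinf N) as [n [Hn Pn]].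
        exists (n + N0). split; [lia|exact Pn].
Qed.

Lemma pi_not_zero (H : PocSet) (A : H -> Prop) :
  (forall h, A h -> proper H h) -> pi_set H A (zero H) -> False.
Proof.
  intros Hp [[a [Aa E]]|[a [Aa [E N]]]].
  - apply (Hp a Aa). left. apply le_antisym; [exact E| apply zero_min].
  - apply N. apply le_antisym; [exact E| apply zero_min].
Qed.

Lemma pi_case2 (H : PocSet) (A : H -> Prop) :
  (forall h, A h -> proper H h) -> transverse_set H A ->
  forall h k a1 a2, A a1 -> A a2 -> le H a1 h -> lt H (star H a2) k ->
  le H h (star H k) -> False.
Proof.
  intros Hp Ht h k a1 a2 A1 A2 E1 [E2 N2] E.
  assert (F1 : le H a1 (star H k)) by (eapply le_trans; eauto).
  assert (F2 : le H (star H k) a2) by (apply sr1; exact E2).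
  destruct (classic (a1 = a2)) as [Eq|Neq].
  - subst a2. apply N2. assert (star H k = a1) by (apply le_antisym; auto).
    rewrite <- H0, star_invol. reflexivity.
  - apply (Ht a1 a2 A1 A2 Neq). left. eapply le_trans; eauto.
Qed.

Lemma pi_cons (H : PocSet) (A : H -> Prop) :
  (forall h, A h -> proper H h) -> transverse_set H A ->
  forall h k, pi_set H A h -> pi_set H A k -> le H h (star H k) -> False.
Proof.
  intros Hp Ht h k [[a1 [A1 E1]]|[a1 [A1 E1]]] [[a2 [A2 E2]]|[a2 [A2 E2]]] E.
  - assert (F : le H a1 (star H a2)).
    { eapply le_trans; [exact E1|]. eapply le_trans; [exact E|]. apply star_rev; exact E2. }
    destruct (classic (a1 = a2)) as [Eq|Neq].
    + subst a2. apply (Hp a1 A1). left. apply star_poc. exact F.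
    + apply (Ht a1 a2 A1 A2 Neq). right; right; left. exact F.
  - exact (pi_case2 H A Hp Ht h k a1 a2 A1 A2 E1 E2 E).
  - exact (pi_case2 H A Hp Ht k h a2 a1 A2 A1 E2 E1 (sr2 H h k E)).
  - destruct E1 as [E1 _]. destruct E2 as [E2 _].
    assert (F : le H (star H a1) a2).
    { eapply le_trans; [exact E1|]. eapply le_trans; [exact E|]. apply sr1; exact E2. }
    destruct (classic (a1 = a2)) as [Eq|Neq].
    + subst a2. apply (Hp a1 A1). right. apply self_star_le. exact F.
    + apply (Ht a1 a2 A1 A2 Neq). right; left. exact F.
Qed.

Lemma dir1 (H : PocSet) : discrete H -> omega_dimensional H ->
  (exists h : H, proper H h) ->
  forall A : H -> Prop, maximal_transverse H A ->
     ultrafilter H (pi_set H A) /\ principal H (pi_set H A).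
Proof.
  intros Hd Ho [p Pp] A [Hp [Ht Hm]].
  assert (Hne : exists a, A a).
  { apply NNPP; intro Hno. apply Hno. exists p.
    apply (Hm (fun k => A k \/ k = p)).
    - intros h [Ah| ->]; auto.
    - intros h k [Ah| ->] [Ak| ->] neq.
      + apply Ht; auto.
      + exfalso; apply Hno; eauto.
      + exfalso; apply Hno; eauto.
      + exfalso; apply neq; reflexivity.
    - intros h Ah; left; exact Ah.
    - right; reflexivity. }
  assert (Htot : forall h, pi_set H A h \/ pi_set H A (star H h)).
  { intro h. destruct (classic (A h)) as [Ah|NAh].
    { left. left. exists h. split; [exact Ah| apply le_refl]. }
    destruct (classic (proper H h)) as [Ph|NPh].
    - assert (Hx : exists a, A a /\ a <> h /\ nested H h a).
      { apply NNPP; intro Hno. apply NAh.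
        apply (Hm (fun k => A k \/ k = h)).
        - intros x [Ax| ->]; auto.
        - intros x y [Ax| ->] [Ay| ->] neq.
          + apply Ht; auto.
          + intro N. apply Hno. exists x. split; [exact Ax|split; [exact neq| apply nested_sym; exact N]].
          + intro N. apply Hno. exists y. split; [exact Ay|split; [intro E; apply neq; symmetry; exact E| exact N]].
          + exfalso; apply neq; reflexivity.
        - intros x Ax; left; exact Ax.
        - right; reflexivity. }
      destruct Hx as [a [Aa [Nah [E|[E|[E|E]]]]]].
      + right. right. exists a. split; [exact Aa|split].
        * apply star_rev; exact E.
        * intro Q. apply Nah. apply star_inj. exact Q.
      + assert (F : le H (star H a) h) by (apply sr1; exact E).
        destruct (classic (star H a = h)) as [Q|Q].
        * right. left. exists a. split; [exact Aa|]. rewrite <- Q, star_invol. apply le_refl.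
        * left. right. exists a. split; [exact Aa| split; assumption].
      + right. left. exists a. split; [exact Aa| apply sr2; exact E].
      + left. left. exists a. split; [exact Aa| apply sr3; exact E].
    - unfold proper in NPh. apply NNPP in NPh. destruct Hne as [a Aa].
      destruct NPh as [->| ->].
      + right. left. exists a. split; [exact Aa| apply le_top].
      + left. left. exists a. split; [exact Aa| apply le_top]. }
  split; [split|].
  - intro h. destruct (Htot h) as [P|P].
    + left. split; [exact P|]. intro Q. apply (pi_cons H A Hp Ht h (star H h) P Q).
      rewrite star_invol. apply le_refl.
    + right. split; [|exact P]. intro Q. apply (pi_cons H A Hp Ht h (star H h) Q P).
      rewrite star_invol. apply le_refl.
  - intros h k Ph Pk E. exact (pi_cons H A Hp Ht h k Ph Pk E).
  - intros f Hf D.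
    destruct (Ho A Ht) as [LA HLA].
    destruct (pigeon H (LA ++ map (star H) LA) (fun x n => proper H x /\ le H x (f n)))
      as [x [_ Hinf]].
    { intro n. destruct (Hf n) as [[a [Aa E]]|[a [Aa [E _]]]].
      - exists a. split; [apply in_or_app; left; apply HLA; exact Aa| split; [apply Hp; exact Aa| exact E]].
      - exists (star H a). split.
        + apply in_or_app; right. apply in_map. apply HLA; exact Aa.
        + split; [apply proper_star; apply Hp; exact Aa| exact E]. }
    assert (Px : proper H x) by (destruct (Hinf 0) as [n [_ [P _]]]; exact P).
    assert (Hall : forall n, le H x (f n)).
    { intro n. destruct (Hinf n) as [m [Hmn [_ E]]]. eapply le_trans; [exact E|].
      apply (desc_le H f D); exact Hmn. }
    destruct (classic (exists N1, f N1 <> star H (zero H))) as [[N1 HN1]|Hno].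
    + assert (PN1 : proper H (f N1)).
      { intros [E|E].
        - apply (pi_not_zero H A Hp). rewrite <- E. apply Hf.
        - exact (HN1 E). }
      destruct (Hd x (f N1) Px PN1) as [L HL].
      apply (ev_const H f D L N1). intros n Hn. apply HL. split; [apply Hall|].
      apply (desc_le H f D); exact Hn.
    + exists 0. intros n _.
      assert (forall m, f m = star H (zero H)).
      { intro m. apply NNPP. intro Q. apply Hno. exists m. exact Q. }
      rewrite !H0. reflexivity.
Qed.

Fixpoint chain {T : Type} (g : T -> T) (x : T) (n : nat) : T :=
  match n with 0 => x | S n => g (chain g x n) end.

Fixpoint build {T : Type} (g : list T -> T) (n : nat) : list T :=
  match n with 0 => nil | S n => g (build g n) :: build g n end.

Lemma build_len {T : Type} (g : list T -> T) n : length (build g n) = n.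
Proof. induction n; simpl; auto. Qed.

Lemma build_mono {T : Type} (g : list T -> T) n k : incl (build g n) (build g (k + n)).
Proof. induction k; simpl; intros x Hx; auto. right. apply IHk. exact Hx. Qed.

Definition minimal (H : PocSet) (alpha : H -> Prop) (m : H) : Prop :=
  alpha m /\ forall y, alpha y -> le H y m -> y = m.

Lemma min_below (H : PocSet) (alpha : H -> Prop) :
  principal H alpha ->
  forall x, alpha x -> exists m, minimal H alpha m /\ le H m x.
Proof.
  intros Hpr x Ax. apply NNPP; intro Hno.
  set (Q := fun y => alpha y /\ ~ exists m, minimal H alpha m /\ le H m y).
  assert (step : forall y, exists z, Q y -> (Q z /\ le H z y /\ z <> y)).
  { intro y. destruct (classic (Q y)) as [[Ay Hny]|Hq]; [|exists y; tauto].
    assert (Hnm : ~ forall z, alpha z -> le H z y -> z = y).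
    { intro Hall. apply Hny. exists y. split; [split; auto| apply le_refl]. }
    apply not_all_ex_not in Hnm. destruct Hnm as [z Hz].
    apply imply_to_and in Hz. destruct Hz as [Az Hz].
    apply imply_to_and in Hz. destruct Hz as [Ezy Nzy].
    exists z. intros _. split; [|split; assumption].
    split; [exact Az|]. intros [m [Mm Em]]. apply Hny. exists m. split; [exact Mm|].
    eapply le_trans; eauto. }
  set (next := fun y => epsilon (inhabits x) (fun z => Q y -> (Q z /\ le H z y /\ z <> y))).
  assert (Hn : forall y, Q y -> Q (next y) /\ le H (next y) y /\ next y <> y).
  { intros y Qy. exact (epsilon_spec (inhabits x) _ (step y) Qy). }
  assert (Qf : forall n, Q (chain next x n)).
  { induction n; simpl.
    - split; [exact Ax| exact Hno].
    - apply Hn; exact IHn. }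
  destruct (Hpr (chain next x)) as [N HN].
  - intro n. apply Qf.
  - intro n. simpl. apply Hn. apply Qf.
  - apply (proj2 (proj2 (Hn _ (Qf N)))). change (chain next x (S N) = chain next x N).
    apply HN. lia.
Qed.

Lemma dir2 (H : PocSet) : omega_dimensional H ->
  (exists h : H, proper H h) ->
  forall alpha : H -> Prop, ultrafilter H alpha -> principal H alpha ->
     exists A : H -> Prop, maximal_transverse H A /\
       forall h, alpha h <-> pi_set H A h.
Proof.
  intros Ho [p Pp] alpha [Hu1 Hu2] Hpr.
  assert (up : forall a h, alpha a -> le H a h -> alpha h).
  { intros a h Aa E. destruct (Hu1 h) as [[X _]|[_ X]]; auto.
    exfalso. apply (Hu2 a (star H h) Aa X). rewrite star_invol. exact E. }
  assert (nz : ~ alpha (zero H)).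
  { intro Z. apply (Hu2 _ _ Z Z). apply zero_min. }
  assert (minprop : forall m, minimal H alpha m -> proper H m).
  { intros m [Am Mm] [E|E].
    - subst m. exact (nz Am).
    - assert (Hq : exists q, alpha q /\ proper H q).
      { destruct (Hu1 p) as [[X _]|[_ X]]; eexists; split; eauto. apply proper_star; exact Pp. }
      destruct Hq as [q [Aq Pq]]. apply Pq. right.
      rewrite <- E. apply Mm; [exact Aq|]. rewrite E. apply le_top. }
  set (Pl := fun l : list H => NoDup l /\ (forall x, In x l -> minimal H alpha x) /\
        (forall x y, In x l -> In y l -> x <> y -> transverse H x y)).
  assert (Hex : exists l, Pl l /\ forall m, minimal H alpha m -> ~ In m l ->
             exists a, In a l /\ nested H m a).
  { apply NNPP; intro Hno.
    assert (Hstep : forall l, exists m, Pl l -> Pl (m :: l)).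
    { intro l. destruct (classic (Pl l)) as [Pl0|Pn]; [|exists (zero H); tauto].
      apply NNPP; intro Hnm. apply Hno. exists l. split; auto.
      intros m Mm Nin. apply NNPP; intro Hna. apply Hnm. exists m. intros _.
      destruct Pl0 as [ND [Mins Tr]]. split; [constructor; auto|split].
      - intros x [ <-|Hx]; auto.
      - intros x y [ <-|Hx] [ <-|Hy] neq.
        + exfalso; apply neq; reflexivity.
        + intro N. apply Hna. exists y. split; auto.
        + intro N. apply Hna. exists x. split; auto. apply nested_sym; auto.
        + apply Tr; auto. }
    set (next := fun l => epsilon (inhabits (zero H)) (fun m => Pl l -> Pl (m :: l))).
    assert (PL : forall n, Pl (build next n)).
    { induction n; simpl.
      - split; [constructor| split; intros x; [intros []| intros y []]].
      - exact (epsilon_spec (inhabits (zero H)) _ (Hstep (build next n)) IHn). }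
    destruct (Ho (fun x => exists n, In x (build next n))) as [K HK].
    - intros x y [n Hx] [m Hy] neq.
      destruct (PL (m + n)) as [_ [_ Tr]]. apply Tr; auto.
      + apply build_mono; exact Hx.
      + replace (m + n) with (n + m) by lia. apply build_mono; exact Hy.
    - assert (Hl := @NoDup_incl_length _ (build next (S (length K))) K (proj1 (PL _))).
      rewrite build_len in Hl.
      assert (S (length K) <= length K).
      { apply Hl. intros x Hx. apply HK. exists (S (length K)). exact Hx. }
      lia. }
  destruct Hex as [LA [[ND [Mins Tr]] Hmax]].
  assert (adj : forall m, minimal H alpha m -> ~ In m LA ->
            exists a, In a LA /\ le H (star H a) m).
  { intros m Mm Nin. destruct (Hmax m Mm Nin) as [a [Ina Na]].
    destruct (Mins a Ina) as [Aa Ma]. destruct Mm as [Am Mm'].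
    assert (neq : a <> m) by (intro E; subst; contradiction).
    exists a. split; [exact Ina|].
    destruct Na as [E|[E|[E|E]]].
    - exfalso. apply neq. symmetry. apply Ma; assumption.
    - apply sr1; exact E.
    - exfalso. exact (Hu2 m a Am Aa E).
    - exfalso. apply neq. apply Mm'; [exact Aa|]. apply sr3; exact E. }
  assert (key : forall x, alpha x -> (forall a, In a LA -> ~ nested H x a) -> False).
  { intros x Ax HT. destruct (min_below H alpha Hpr x Ax) as [m [Mm Em]].
    destruct (classic (In m LA)) as [Inm|Nin].
    - apply (HT m Inm). right; right; right. apply star_rev; exact Em.
    - destruct (adj m Mm Nin) as [a [Ina Ea]]. apply (HT a Ina).
      right; left. apply sr1. eapply le_trans; eauto. }
  exists (fun h => In h LA). split; [split; [|split]|].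
  - intros h Hh. apply minprop. apply Mins; exact Hh.
  - intros h k Hh Hk neq. apply Tr; auto.
  - intros B Bp Bt BA h Bh. apply NNPP; intro Nin.
    assert (Ht' : forall a, In a LA -> transverse H h a).
    { intros a Ina. apply Bt; auto. intro E; subst; contradiction. }
    destruct (Hu1 h) as [[Ah _]|[_ Ash]].
    + exact (key h Ah Ht').
    + apply (key (star H h) Ash). intros a Ina N. apply (Ht' a Ina). apply nested_star. exact N.
  - intro h. split.
    + intro Ah. destruct (min_below H alpha Hpr h Ah) as [m [Mm Em]].
      destruct (classic (In m LA)) as [Inm|Nin].
      * left. exists m. split; assumption.
      * destruct (adj m Mm Nin) as [a [Ina Ea]].
        assert (F : le H (star H a) h) by (eapply le_trans; eauto).
        destruct (classic (star H a = h)) as [Q|Q].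
        -- exfalso. subst h. apply (Hu2 a (star H a) (proj1 (Mins a Ina)) Ah).
           rewrite star_invol. apply le_refl.
        -- right. exists a. split; [exact Ina| split; assumption].
    + intros [[a [Ina E]]|[a [Ina [E N]]]].
      * apply (up a h); [apply (Mins a Ina)| exact E].
      * destruct (Hu1 h) as [[X _]|[_ X]]; [exact X|].
        exfalso. apply N. destruct (Mins a Ina) as [_ Ma].
        assert (star H h = a) by (apply Ma; [exact X| apply sr1; exact E]).
        rewrite <- H0, star_invol. reflexivity.
Qed.

Theorem mainTheorem15 (H : PocSet) :
  discrete H -> omega_dimensional H ->
  (exists h : H, proper H h) ->
  (forall A : H -> Prop, maximal_transverse H A ->
     ultrafilter H (pi_set H A) /\ principal H (pi_set H A)) /\
  (forall alpha : H -> Prop, ultrafilter H alpha -> principal H alpha ->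
     exists A : H -> Prop, maximal_transverse H A /\
       forall h, alpha h <-> pi_set H A h).
Proof.
  intros Hd Ho Hp. split.
  - exact (dir1 H Hd Ho Hp).
  - exact (dir2 H Ho Hp).
Qed.
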